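(* For every $\varepsilon>0$ there exists a constant $a_\varepsilon>0$, independent of $n$, such that for every dimension $n\ge1$, $$\frac{\operatorname{vol}\big(B_1^n+(a_\varepsilon/\sqrt{n})\,B_2^n\big)}{\operatorname{vol}\big((a_\varepsilon/\sqrt{n})\,B_2^n\big)}\le 2^{\varepsilon n}.$$
   Context: For $p\in[1,\infty]$, $B_p^n=\{x\in\mathbb{R}^n : \|x\|_p\le 1\}$ is the closed unit $\ell_p$-ball in $\mathbb{R}^n$; $\operatorname{vol}$ is $n$-dimensional Lebesgue measure and $A+C=\{a+c: a\in A, c\in C\}$ is the Minkowski sum. *)

(* Defs.v *)
From mathcomp Require Import all_boot all_order all_algebra.
From mathcomp Require Import all_classical all_reals all_analysis.
Set Implicit Arguments. Unset Strict Implicit. Unset Printing Implicit Defensive.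
Import Order.TTheory GRing.Theory Num.Theory.
Local Open Scope classical_set_scope.
Local Open Scope ring_scope.

Section Defs.
Variable R : realType.

Definition norm1 n (x : 'rV[R]_n) : R := \sum_(i < n) `|x ord0 i|.
Definition norm2 n (x : 'rV[R]_n) : R := Num.sqrt (\sum_(i < n) x ord0 i ^+ 2).

Definition l1ball n : set 'rV[R]_n := [set x | norm1 x <= 1].
Definition l2ball n : set 'rV[R]_n := [set x | norm2 x <= 1].

Definition minkowski_sum n (A C : set 'rV[R]_n) : set 'rV[R]_n :=
  [set z | exists a c, A a /\ C c /\ z = a + c].
Definition dilate n (t : R) (A : set 'rV[R]_n) : set 'rV[R]_n := [set t *: x | x in A].

Definition box n (a b : 'rV[R]_n) : set 'rV[R]_n :=
  [set x | forall i, a ord0 i <= x ord0 i <= b ord0 i].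
Definition boxvol n (a b : 'rV[R]_n) : R :=
  \prod_(i < n) Num.max 0 (b ord0 i - a ord0 i).

(* n-dimensional Lebesgue (outer) measure: infimum of total volumes of
   countable covers by boxes. *)
Definition lebvol n (A : set 'rV[R]_n) : \bar R :=
  ereal_inf [set s : \bar R | exists a b : nat -> 'rV[R]_n,
     A `<=` \bigcup_k box (a k) (b k) /\
     s = (\sum_(0 <= k <oo) (boxvol (a k) (b k))%:E)%E].
End Defs.

(* Main.v *)
Require Import Defs.
From mathcomp Require Import all_boot all_order all_algebra.
From mathcomp Require Import all_classical all_reals all_analysis.
From mathcomp Require Import lra ring zify.
Import Order.TTheory GRing.Theory Num.Theory.
Local Open Scope ring_scope.

Section Leb.
Local Open Scope classical_set_scope.
Local Open Scope ereal_scope.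
Variable R : realType.

Lemma boxvol_ge0 n (a b : 'rV[R]_n) : (0 <= boxvol a b)%R.
Proof. by apply: prodr_ge0 => i _; rewrite le_max lexx. Qed.

Lemma lebvol_le n (A : set 'rV[R]_n) (a b : nat -> 'rV[R]_n) :
  A `<=` \bigcup_k box (a k) (b k) ->
  lebvol A <= \sum_(0 <= k <oo) (boxvol (a k) (b k))%:E.
Proof. by move=> H; apply: ereal_inf_lbound; exists a, b. Qed.

Lemma lebvol_ge0 n (A : set 'rV[R]_n) : 0 <= lebvol A.
Proof.
apply: le_ereal_inf_tmp => _ [a [b [_ ->]]].
by apply: nneseries_ge0 => k _ _; rewrite lee_fin boxvol_ge0.
Qed.

Lemma lebvol_mono n (A B : set 'rV[R]_n) : A `<=` B -> lebvol A <= lebvol B.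
Proof.
move=> AB; apply: le_ereal_inf_tmp => _ [a [b [HB ->]]].
by apply: lebvol_le => x /AB /HB.
Qed.

Lemma boxvol_aff n (c a b : 'rV[R]_n) (t : R) : (0 <= t)%R ->
  boxvol (c + t *: a) (c + t *: b) = (t ^+ n * boxvol a b)%R.
Proof.
move=> t0; rewrite /boxvol.
rewrite (eq_bigr (fun i => t * Num.max 0 (b ord0 i - a ord0 i)))%R; last first.
  move=> i _; rewrite !mxE maxr_pMr // mulr0; congr Num.max.
  by rewrite mulrBr; lra.
by rewrite big_split /= prodr_const card_ord.
Qed.

Lemma lebvol_aff n (A : set 'rV[R]_n) (c : 'rV[R]_n) (t : R) : (0 < t)%R ->
  lebvol [set (c + t *: x)%R | x in A] <= (t ^+ n)%:E * lebvol A.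
Proof.
move=> t0.
have tn0 : (0 < t ^+ n)%R by rewrite exprn_gt0.
have key : forall s, [set s : \bar R | exists a b : nat -> 'rV[R]_n,
     A `<=` \bigcup_k box (a k) (b k) /\
     s = (\sum_(0 <= k <oo) (boxvol (a k) (b k))%:E)%E] s ->
   lebvol [set (c + t *: x)%R | x in A] <= (t ^+ n)%:E * s.
  move=> _ [a [b [HA ->]]].
  rewrite -nneseriesZl; last by move=> k _; rewrite lee_fin boxvol_ge0.
  under eq_eseriesr => k _ do rewrite -EFinM -(boxvol_aff _ c (a k) (b k) t (ltW t0)).
  apply: lebvol_le => _ [x /HA [k _ Hk] <-]; exists k => // i.
  rewrite !mxE; have /andP[h1 h2] := Hk i.
  by rewrite !lerD2l !ler_pM2l // h1 h2.
have -> : lebvol [set (c + t *: x)%R | x in A] =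
   (t ^+ n)%:E * ((t ^+ n)^-1%:E * lebvol [set (c + t *: x)%R | x in A]).
  by rewrite muleA -EFinM divff ?gt_eqF // mul1e.
apply: lee_wpmul2l; first by rewrite lee_fin ltW.
apply: le_ereal_inf_tmp => s Hs.
have := key s Hs.
move=> /(lee_wpmul2l (x := ((t ^+ n)^-1)%:E)); rewrite lee_fin invr_ge0 ltW //.
by move=> /(_ isT); rewrite muleA -EFinM mulVf ?gt_eqF // mul1e.
Qed.

Lemma interleave_series (f g : nat -> \bar R) :
  (forall k, 0 <= f k) -> (forall k, 0 <= g k) ->
  \sum_(0 <= k <oo) (if odd k then g k./2 else f k./2) =
  \sum_(0 <= k <oo) f k + \sum_(0 <= k <oo) g k.
Proof.
move=> f0 g0.
have h0 : forall k, 0 <= (if odd k then g k./2 else f k./2).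
  by move=> k; case: ifP.
rewrite !nneseries_esumT // (esumID [set k | odd k]); last by move=> *; exact: h0.
rewrite !setTI addeC; congr (_ + _).
  rewrite (reindex_esum [set: nat] _ (fun j => j.*2)).
    by apply: eq_esum => j _; rewrite odd_double doubleK.
  split.
  - by move=> j _; rewrite /setC /= odd_double.
  - by move=> i j _ _ /(congr1 half); rewrite !doubleK.
  - move=> k /negP ok; exists k./2 => //.
    by rewrite -[RHS](odd_double_half k) (negbTE ok).
rewrite (reindex_esum [set: nat] _ (fun j => j.*2.+1)).
  by apply: eq_esum => j _; rewrite /= odd_double /= uphalf_double.
split.
- by move=> j _; rewrite /= odd_double.
- by move=> i j _ _ [] /(congr1 half); rewrite !doubleK.
- move=> k /= ok; exists k./2 => //.
  by rewrite -[RHS](odd_double_half k) ok add1n.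
Qed.

Lemma lebvol_union n (A B : set 'rV[R]_n) :
  lebvol (A `|` B) <= lebvol A + lebvol B.
Proof.
have [fA|nfA] := boolP (lebvol A \is a fin_num); last first.
  have -> : lebvol A = +oo.
    by move: nfA; rewrite ge0_fin_numE ?lebvol_ge0 // ltey negbK => /eqP.
  by rewrite addye ?leey // gt_eqF // (lt_le_trans _ (lebvol_ge0 _ B)) ?ltNy0.
have [fB|nfB] := boolP (lebvol B \is a fin_num); last first.
  have -> : lebvol B = +oo.
    by move: nfB; rewrite ge0_fin_numE ?lebvol_ge0 // ltey negbK => /eqP.
  by rewrite addey ?leey // gt_eqF // (lt_le_trans _ (lebvol_ge0 _ A)) ?ltNy0.
apply/lee_addgt0Pr => e e0.
have e20 : (0 < e / 2)%R by rewrite divr_gt0.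
have [_ [a1 [b1 [HA ->]]] lt1] := lb_ereal_inf_adherent e20 fA.
have [_ [a2 [b2 [HB ->]]] lt2] := lb_ereal_inf_adherent e20 fB.
pose a k := if odd k then a2 k./2 else a1 k./2.
pose b k := if odd k then b2 k./2 else b1 k./2.
apply: (le_trans (lebvol_le _ _ a b _)).
  move=> x [/HA [k _ Hk]|/HB [k _ Hk]].
    by exists k.*2 => //; rewrite /a /b odd_double doubleK.
  by exists k.*2.+1 => //; rewrite /a /b /= odd_double /= uphalf_double.
have E k : (boxvol (a k) (b k))%:E =
   (if odd k then (boxvol (a2 k./2) (b2 k./2))%:E
             else (boxvol (a1 k./2) (b1 k./2))%:E) by rewrite /a /b; case: ifP.
under eq_eseriesr => k _ do rewrite E.
rewrite (interleave_series (fun j => (boxvol (a1 j) (b1 j))%:E)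
   (fun j => (boxvol (a2 j) (b2 j))%:E)); try by move=> k; rewrite lee_fin boxvol_ge0.
have -> : ((lebvol A + lebvol B) + e%:E = (lebvol A + (e/2)%:E) + (lebvol B + (e/2)%:E))%E.
  rewrite -(fineK fA) -(fineK fB) -!EFinD; congr EFin; lra.
by apply: leeD; apply: ltW.
Qed.

Lemma lebvol_cover n (T : eqType) (s : seq T) (A : T -> set 'rV[R]_n)
    (X : set 'rV[R]_n) (c : \bar R) :
  (0 < n)%N -> 0 <= c -> (forall i, i \in s -> lebvol (A i) <= c) ->
  X `<=` [set x | exists2 i, i \in s & A i x] ->
  lebvol X <= (size s)%:R%:E * c.
Proof.
move=> n0 c0; elim: s X => [|i s IH] X HA HX /=.
  rewrite mul0e.
  apply: (le_trans (lebvol_le _ _ (fun _ => 0%R) (fun _ => 0%R) _)).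
    by move=> x /HX [].
  rewrite eseries0 // => k _ _; congr EFin; rewrite /boxvol.
  by rewrite (bigD1 (Ordinal n0)) //= subrr maxxx mul0r.
apply: (le_trans (lebvol_mono _ _ (A i `|` [set x | exists2 j, j \in s & A j x]) _)).
  move=> x /HX [j]; rewrite inE => /orP[/eqP -> ?|js ?]; first by left.
  by right; exists j.
apply: (le_trans (lebvol_union _ _ _)).
have -> : ((size s).+1%:R = (size s)%:R + 1 :> R)%R by rewrite -addn1 natrD.
rewrite EFinD ge0_muleDl ?lee_fin // mul1e addeC.
apply: leeD; last by apply: HA; rewrite inE eqxx.
by apply: IH => // j js; apply: HA; rewrite inE js orbT.
Qed.
End Leb.


Section Geo.
Local Open Scope classical_set_scope.
Set Implicit Arguments. Unset Strict Implicit.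
Variable R : realType.

Definition bet (m : nat) : R := if m == 0%N then 1 else (m%:R)^-1.

Lemma coord_err (m : nat) (x : R) : `|x| <= 1 ->
  (x - (if 0 <= x then 1 else -1) * ((Num.trunc (m%:R * `|x|))%:R / m%:R)) ^+ 2
   <= bet m * `|x|.
Proof.
move=> x1; rewrite /bet.
have ax0 : 0 <= `|x| by [].
have [->|m0] := eqVneq m 0%N.
  rewrite /= invr0 !mulr0 subr0 mul1r -(ger0_norm (sqr_ge0 x)) normrX expr2.
  by rewrite ler_piMl.
set k := Num.trunc _.
have mx0 : 0 <= m%:R * `|x| by rewrite mulr_ge0.
have /andP[h1 h2] := truncn_itv mx0; rewrite -/k in h1 h2.
have mpos : 0 < m%:R :> R by rewrite ltr0n lt0n.
have e1 : 0 <= `|x| - k%:R / m%:R.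
  by rewrite subr_ge0 ler_pdivrMr // mulrC.
have e2 : `|x| - k%:R / m%:R <= m%:R^-1.
  have h2' : m%:R * `|x| < k%:R + 1 by rewrite natr1.
  have -> : `|x| - k%:R / m%:R = (m%:R * `|x| - k%:R) * m%:R^-1.
    by field; rewrite gt_eqF.
  rewrite -[X in _ <= X]mul1r; apply: ler_wpM2r; [by rewrite invr_ge0 ler0n | lra].
have -> : (x - (if 0 <= x then 1 else -1) * (k%:R / m%:R)) ^+ 2 = (`|x| - k%:R / m%:R) ^+ 2.
  case: ifPn => x0.
    by rewrite mul1r ger0_norm.
  by rewrite ltr0_norm ?ltNge // -sqrrN; congr (_ ^+ 2); ring.
rewrite expr2; apply: (le_trans (ler_wpM2l e1 e2)).
rewrite [X in _ <= X]mulrC; apply: ler_wpM2r; first by rewrite invr_ge0 ler0n.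
by rewrite lerBlDr lerDl divr_ge0.
Qed.

Definition step n (k : 'I_(n.*2).+1) : 'rV[R]_n :=
  \row_j (((k : nat) == j.+1)%:R - ((k : nat) == (n + j.+1)%N)%:R).

Definition sgn (x : R) : R := if 0 <= x then 1 else -1.

Definition code n (x : 'rV[R]_n) (i : 'I_n) : 'I_(n.*2).+1 :=
  if 0 <= x ord0 i then inord i.+1 else inord (n + i.+1).

Lemma step0 n j : step (ord0 : 'I_(n.*2).+1) ord0 j = 0.
Proof. by rewrite /step mxE /= addnS subrr. Qed.

Lemma step_code n (x : 'rV[R]_n) i j :
  step (code x i) ord0 j = (i == j)%:R * sgn (x ord0 i).
Proof.
have ltin := ltn_ord i; have ltjn := ltn_ord j.
rewrite /code /sgn /step mxE; case: ifP => _.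
  rewrite inordK; last by rewrite -addnn; lia.
  rewrite eqSS (_ : (i.+1 == n + j.+1)%N = false) ?subr0 ?mulr1 //.
  by apply/negbTE/eqP; lia.
rewrite inordK; last by rewrite -addnn; lia.
rewrite eqn_add2l eqSS (_ : (n + i.+1 == j.+1)%N = false) ?sub0r ?mulrN1 //.
by apply/negbTE/eqP; lia.
Qed.

Definition kk n (m : nat) (x : 'rV[R]_n) (i : 'I_n) : nat :=
  Num.trunc (m%:R * `|x ord0 i|).

Definition s0 n m (x : 'rV[R]_n) : seq 'I_(n.*2).+1 :=
  flatten [seq nseq (kk m x i) (code x i) | i <- enum 'I_n] ++
  nseq (m - \sum_i kk m x i) ord0.

Lemma sum_kk n m (x : 'rV[R]_n) : norm1 x <= 1 -> (\sum_i kk m x i <= m)%N.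
Proof.
move=> x1; rewrite -(ler_nat R) natr_sum.
apply: (le_trans (y := \sum_i m%:R * `|x ord0 i|)).
  apply: ler_sum => i _; rewrite /kk truncn_le mulr_ge0 //.
rewrite -mulr_sumr; rewrite -[X in _ <= X]mulr1; apply: ler_wpM2l => //.
Qed.

Lemma size_s0 n m (x : 'rV[R]_n) : norm1 x <= 1 -> size (s0 m x) = m.
Proof.
move=> x1; rewrite /s0 size_cat size_nseq size_flatten /shape -map_comp.
rewrite sumnE big_map big_enum /= (eq_bigr (kk m x)); last by move=> i _; rewrite size_nseq.
have -> : \sum_(i in 'I_n) kk m x i = \sum_(i < n) kk m x i by apply: eq_bigl.
by rewrite subnKC ?sum_kk.
Qed.

Lemma sum_s0 n m (x : 'rV[R]_n) j :
  (\sum_(k <- s0 m x) step k) ord0 j = (kk m x j)%:R * sgn (x ord0 j).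
Proof.
rewrite summxE big_cat /= big_nseq.
rewrite step0.
have -> : iter (m - \sum_i kk m x i) (+%R 0) (0 : R) = 0.
  by rewrite iter_addr_0 mul0rn.
rewrite addr0 big_flatten big_map big_enum /=.
under eq_bigr => i _ do rewrite big_nseq iter_addr_0 step_code.
rewrite (bigD1 j) //= eqxx big1 ?addr0; first by rewrite mul1r mulr_natl.
by move=> i /negbTE ->; rewrite mul0r mul0rn.
Qed.

Definition pt n m (s : seq 'I_(n.*2).+1) : 'rV[R]_n :=
  (m%:R)^-1 *: \sum_(k <- s) step k.

Definition Sset (n m : nat) : {set m.-tuple 'I_(n.*2).+1} :=
  [set t : m.-tuple 'I_(n.*2).+1 | sorted leq (map val t)]%SET.
Arguments Sset : clear implicits.

Lemma sq_split (e v d : R) : 0 < d ->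
  (e + v) ^+ 2 <= (1 + d^-1) * e ^+ 2 + (1 + d) * v ^+ 2.
Proof.
move=> d0; rewrite -subr_ge0.
have -> : (1 + d^-1) * e ^+ 2 + (1 + d) * v ^+ 2 - (e + v) ^+ 2 =
  (e - d * v) ^+ 2 / d by field; rewrite gt_eqF.
by rewrite divr_ge0 ?sqr_ge0 ?ltW.
Qed.

Lemma norm1_coord n (x : 'rV[R]_n) j : `|x ord0 j| <= norm1 x.
Proof.
by rewrite /norm1 (bigD1 j) //= lerDl sumr_ge0.
Qed.

Lemma l2ball_sum n (u : 'rV[R]_n) : l2ball u -> \sum_j u ord0 j ^+ 2 <= 1.
Proof.
rewrite /l2ball /norm2 /= => h.
by rewrite -(ler_sqrt _ ler01) sqrtr1.
Qed.

Lemma sum_l2ball n (u : 'rV[R]_n) : \sum_j u ord0 j ^+ 2 <= 1 -> l2ball u.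
Proof.
rewrite /l2ball /norm2 /= => h.
by rewrite -sqrtr1 ler_sqrt.
Qed.

Lemma l1_cover n m (r d : R) : 0 < r -> 0 < d -> bet m <= (d * r) ^+ 2 ->
  minkowski_sum (@l1ball R n) (dilate r (@l2ball R n)) `<=`
  [set z | exists2 t, t \in enum (Sset n m) &
     [set pt m t + (1 + d) *: y | y in dilate r (@l2ball R n)] z].
Proof.
move=> r0 d0 hb z [x [_ [x1 [[u u1 <-] ->]]]].
rewrite /l1ball /= in x1.
set s := s0 m x.
pose le := fun a b : 'I_(n.*2).+1 => (a <= b)%N.
have ss : size (sort le s) == m by rewrite size_sort size_s0.
pose t : m.-tuple _ := Tuple ss.
have Hp : pt m t = pt m s.
  by rewrite /pt /=; congr (_ *: _); apply: perm_big; rewrite perm_sort.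
exists t.
  rewrite mem_enum inE /= sorted_map; apply: sort_sorted.
  by move=> a b; apply: leq_total.
set c := (1 + d) * r.
have c0 : 0 < c by rewrite mulr_gt0 // ltr_wpDr ?ltW.
pose w := c^-1 *: (x + r *: u - pt m t).
exists (r *: w).
  exists w => //; apply: sum_l2ball.
  have Hw : forall j, w ord0 j = c^-1 * ((x ord0 j - (sgn (x ord0 j)) * ((kk m x j)%:R / m%:R))
              + r * u ord0 j).
    move=> j; rewrite /w Hp /pt !mxE sum_s0 /sgn; ring.
  under eq_bigr => j _ do rewrite Hw exprMn.
  rewrite -mulr_sumr.
  pose e := fun j => x ord0 j - sgn (x ord0 j) * ((kk m x j)%:R / m%:R).
  have He : \sum_j e j ^+ 2 <= (d * r) ^+ 2.
    apply: (le_trans (y := \sum_j bet m * `|x ord0 j|)).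
      apply: ler_sum => j _; apply: coord_err.
      exact: le_trans (norm1_coord x j) x1.
    rewrite -mulr_sumr; apply: le_trans hb.
    rewrite -[X in _ <= X]mulr1; apply: ler_wpM2l => //.
    by rewrite /bet; case: ifP => // _; rewrite invr_ge0.
  have Hu := l2ball_sum u1.
  have HS : \sum_j (e j + r * u ord0 j) ^+ 2 <=
      (1 + d^-1) * \sum_j e j ^+ 2 + (1 + d) * (r ^+ 2 * \sum_j u ord0 j ^+ 2).
    rewrite !mulr_sumr -big_split /=; apply: ler_sum => j _.
    by rewrite (_ : r ^+ 2 * u ord0 j ^+ 2 = (r * u ord0 j) ^+ 2) ?sq_split // exprMn.
  have h1 : (1 + d^-1) * \sum_j e j ^+ 2 <= (1 + d^-1) * (d * r) ^+ 2.
    by apply: ler_wpM2l => //; rewrite addr_ge0 // invr_ge0 ltW.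
  have h2 : (1 + d) * (r ^+ 2 * \sum_j u ord0 j ^+ 2) <= (1 + d) * r ^+ 2.
    apply: ler_wpM2l; first by rewrite addr_ge0 // ltW.
    by rewrite -[X in _ <= X]mulr1; apply: ler_wpM2l => //; rewrite sqr_ge0.
  have id : (1 + d^-1) * (d * r) ^+ 2 + (1 + d) * r ^+ 2 = c ^+ 2.
    by rewrite /c; field; rewrite gt_eqF.
  rewrite exprVn mulrC ler_pdivrMr ?exprn_gt0 // mul1r -id.
  exact: le_trans HS (lerD h1 h2).
rewrite /w !scalerA -/c mulfV ?gt_eqF // scale1r addrC subrK.
by [].
Qed.
End Geo.

Section Count.
Local Open Scope classical_set_scope.
Set Implicit Arguments. Unset Strict Implicit.
Variable R : realType.

Lemma ffact_le_exp N m : (N ^_ m <= N ^ m)%N.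
Proof.
elim: m N => [|m IH] N; first by [].
rewrite ffactnS expnS leq_mul //; apply: (leq_trans (IH _)).
case: m {IH} => [|m]; first by [].
by rewrite leq_exp2r // leq_pred.
Qed.


Lemma binom_bound (N m : nat) : (0 < m)%N ->
  'C(N, m)%:R <= ((N%:R / m%:R) ^+ m * expR m%:R :> R).
Proof.
move=> m0.
have f0 : (m`!)%:R != 0 :> R by rewrite pnatr_eq0 -lt0n fact_gt0.
have mR0 : m%:R != 0 :> R by rewrite pnatr_eq0 -lt0n.
have E : 'C(N, m)%:R = (N ^_ m)%:R / (m`!)%:R :> R.
  by rewrite -bin_ffact natrM mulfK.
rewrite E.
apply: (le_trans (y := (N ^ m)%:R / (m`!)%:R)).
  by apply: ler_wpM2r; [rewrite invr_ge0 ler0n | rewrite ler_nat ffact_le_exp].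
have h : (m%:R ^+ m / (m`!)%:R) <= expR m%:R :> R.
  case: m m0 {f0 mR0 E} => // m' _.
  have := expR_ge1Dxn (R := R) (x := m'.+1%:R) m' (ler0n _ _); lra.
have -> : (N ^ m)%:R / (m`!)%:R = (N%:R / m%:R) ^+ m * (m%:R ^+ m / (m`!)%:R) :> R.
  by rewrite natrX exprMn exprVn; field; rewrite f0 expf_neq0.
apply: ler_wpM2l => //; apply: exprn_ge0; apply: divr_ge0; apply: ler0n.
Qed.

Lemma count_bound (c : R) (n : nat) : 0 < c -> (0 < n)%N ->
  'C(Num.trunc (n%:R / ((2 + 16 / c) / c)) + n.*2,
     Num.trunc (n%:R / ((2 + 16 / c) / c)))%:R <= expR (c * n%:R).
Proof.
move=> c0 n0.
set q := 16 / c; set K := (2 + q) / c; set m := Num.trunc _.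
have q0 : 0 < q by rewrite divr_gt0.
have cq : c * q = 16 by rewrite /q; field; rewrite gt_eqF.
have K0 : 0 < K by rewrite divr_gt0 // addr_gt0.
have cK : c * K = 2 + q by rewrite /K; field; rewrite gt_eqF.
have nK0 : 0 <= n%:R / K by rewrite divr_ge0 // ltW.
have /andP[hm1 hm2] := truncn_itv nK0; rewrite -/m in hm1 hm2.
have Km : m%:R * K <= n%:R by rewrite -ler_pdivlMr.
have nK : n%:R < (m%:R + 1) * K by rewrite -ltr_pdivrMr // natr1.
have cn0 : 0 <= c * n%:R by rewrite mulr_ge0 // ltW.
have [m0|m0] := eqVneq m 0%N.
  rewrite m0 bin0; apply: (le_trans _ (expR_ge1Dx _)); lra.
have mpos : (0 < m)%N by rewrite lt0n.
have m1 : 1 <= m%:R :> R by rewrite ler1n.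
apply: (le_trans (binom_bound (m + n.*2) mpos)).
have mR : 0 < m%:R :> R by rewrite ltr0n.
have h1 : (m + n.*2)%:R / m%:R <= 1 + 4 * K :> R.
  rewrite ler_pdivrMr // natrD -muln2 natrM; nra.
have h2 : (1 + 4 * K) * expR 1 <= expR (c * K).
  rewrite cK (_ : 2 + q = 1 + (1 + q)); last by ring.
  rewrite expRD mulrC; apply: ler_wpM2l; first exact: ltW (expR_gt0 _).
  have hq : 0 <= 1 + q by rewrite addr_ge0 // ltW.
  have := @expR_ge1Dxn R (1 + q) 1%N hq.
  rewrite (_ : (2`!)%:R = 2 :> R) //.
  have -> : K = (2 + q) * q / 16.
    by rewrite /K -cq; field; rewrite !gt_eqF.
  nra.
apply: (le_trans (y := ((1 + 4 * K) * expR 1) ^+ m)).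
  rewrite [X in _ <= X]exprMn -expRM_natl mulr1; apply: ler_wpM2r; first exact: ltW (expR_gt0 _).
  apply: lerXn2r; rewrite ?nnegrE //; lra.
apply: (le_trans (y := expR (c * K) ^+ m)).
  have e1 := expR_gt0 (1 : R); have e2 := expR_gt0 (c * K).
  apply: lerXn2r; rewrite ?nnegrE //; try nra; try lra.
rewrite -expRM_natl ler_expR; nra.
Qed.
End Count.


Theorem lemma3 (R : realType) (eps : R) (heps : 0 < eps) :
  exists a : R, 0 < a /\
    forall n : nat, (1 <= n)%N ->
      (lebvol (minkowski_sum (@l1ball R n) (dilate (a / Num.sqrt n%:R) (@l2ball R n)))
       <= (2 `^ (eps * n%:R))%:E * lebvol (dilate (a / Num.sqrt n%:R) (@l2ball R n)))%E.
Proof.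
have l20 : 0 < ln (2 : R) by apply: ln_gt0; lra.
set c := eps * ln 2 / 2.
have c0 : 0 < c by rewrite /c divr_gt0 // mulr_gt0.
set K := (2 + 16 / c) / c.
have K0 : 0 < K by rewrite /K divr_gt0 // addr_gt0 // divr_gt0.
have sK0 : 0 < Num.sqrt (2 * K) by rewrite sqrtr_gt0 mulr_gt0.
exists (Num.sqrt (2 * K) / c); split; first by rewrite divr_gt0.
move=> n n1.
set a := Num.sqrt (2 * K) / c.
set r := a / Num.sqrt n%:R.
have nR : 0 < n%:R :> R by rewrite ltr0n.
have sn0 : 0 < Num.sqrt n%:R :> R by rewrite sqrtr_gt0.
have r0 : 0 < r by rewrite /r divr_gt0 // divr_gt0.
set m := Num.trunc (n%:R / K).
have nK0 : 0 <= n%:R / K by rewrite divr_ge0 // ltW.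
have /andP[hm1 hm2] := truncn_itv nK0; rewrite -/m in hm1 hm2.
have nK : n%:R < (m%:R + 1) * K by rewrite -ltr_pdivrMr // natr1.
have E : (c * r) ^+ 2 = 2 * K / n%:R.
  have -> : c * r = Num.sqrt (2 * K) / Num.sqrt n%:R.
    by rewrite /r /a; field; rewrite !gt_eqF.
  by rewrite expr_div_n !sqr_sqrtr // ?ler0n // mulr_ge0 // ltW.
have hb : @bet R m <= (c * r) ^+ 2.
  rewrite E /bet; case: eqP => [m0|/eqP m0].
    rewrite m0 mulr0n add0r mul1r in nK.
    by rewrite ler_pdivlMr // mul1r; lra.
  have m1 : 1 <= m%:R :> R by rewrite ler1n lt0n.
  have mR : 0 < m%:R :> R by lra.
  rewrite -subr_ge0.
  have -> : 2 * K / n%:R - m%:R^-1 = (2 * K * m%:R - n%:R) / (n%:R * m%:R).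
    by field; rewrite !gt_eqF.
  by rewrite divr_ge0 ?mulr_ge0 ?ltW //; nra.

set D := dilate r (@l2ball R n).
have Hc := @l1_cover R n m r c r0 c0 hb.
apply: (le_trans (lebvol_mono _ _ _ _ Hc)).
have V0 := lebvol_ge0 _ _ D.
have cn0 : (0 <= ((1 + c) ^+ n)%:E * lebvol D)%E.
  by rewrite mule_ge0 // lee_fin exprn_ge0 // addr_ge0 // ltW.
apply: (le_trans (lebvol_cover _ _ _ (enum (Sset n m))
   (fun t => [set (pt R m t + (1 + c) *: (y : 'rV[R]_n))%R | y in D]%classic) _ _ n1 cn0 _ _)).
- move=> t _; apply: lebvol_aff; lra.
- exact: (fun z h => h).
rewrite muleA -EFinM; apply: lee_wpmul2r => //; rewrite lee_fin.
rewrite -cardE card_sorted_tuples.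
have h1 := count_bound c0 n1; rewrite -/K -/m in h1.
have h2 : (1 + c) ^+ n <= expR (c * n%:R).
  rewrite mulrC expRM_natl; have := expR_gt0 c; have := expR_ge1Dx c.
  by move=> *; apply: lerXn2r; rewrite ?nnegrE //; lra.
apply: (le_trans (ler_pM _ _ h1 h2)); [exact: ler0n | rewrite exprn_ge0 //; lra |].
rewrite -expRD /powR (negbTE (_ : (2 : R) != 0)) //.
rewrite ler_expR le_eqVlt; apply/orP; left; apply/eqP; by rewrite /c; field.

Qed.
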